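(* Let $n,m\in\mathbb N$, $d:=\min\{n,m\}$, fix an integer $k\in\{1,\dots,d-1\}$ and $\theta\in(0,1)$, and set $\alpha:=k+\theta$. Then (a) $\mathcal V_k\subsetneq\mathcal V_\alpha\subsetneq\mathcal V_{k+1}$; (b) $\mathsf K_k\subsetneq\mathsf K_\alpha\subsetneq\mathsf K_{k+1}$; (c) $\mathsf{BP}_k\supsetneq\mathsf{BP}_\alpha\supsetneq\mathsf{BP}_{k+1}$.
   Context: For $\psi=\sum_{i,j}a_{ij}e_i\otimes f_j\in\mathbb C^n\otimes\mathbb C^m$, its Schmidt coefficients $s_1(\psi)\ge\dots\ge s_d(\psi)\ge0$ are the singular values of $[a_{ij}]$. For $\beta\in[1,d]$ with $k'=\lfloor\beta\rfloor$, $\theta'=\beta-k'$, $r'=\lceil\beta\rceil$, a unit vector $\psi$ is $\beta$-admissible if $s_j(\psi)=0$ for $j\ge r'+1$ and, when $\theta'>0$, $s_{k'+1}(\psi)\le\frac{\theta'}{k'}\sum_{j=1}^{k'}s_j(\psi)$; $\mathcal V_\beta$ is the set of these (for integer $\beta$ it is the set of unit vectors of Schmidt rank $\le\beta$). $\mathsf K_\beta$ is the closure of the convex cone generated by $\{\psi\psi^\ast:\psi\in\mathcal V_\beta\}$, and $\mathsf{BP}_\beta:=\{W \text{ Hermitian in } \mathbb M_n\otimes\mathbb M_m:\langle\psi,W\psi\rangle\ge0\ \forall\psi\in\mathcal V_\beta\}$. *)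

(* Defs.v *)
From HB Require Import structures.
From mathcomp Require Import all_boot all_order all_algebra.
From mathcomp Require Import classical_sets reals.
From mathcomp Require Import complex.
Set Implicit Arguments. Unset Strict Implicit. Unset Printing Implicit Defensive.
Import Order.TTheory GRing.Theory Num.Theory.
Local Open Scope ring_scope.
Local Open Scope complex_scope.

Section Defs.
Variables (R : realType) (n m : nat).
Local Notation C := (R[i]).

(* A vector psi = sum_{i,j} a_ij e_i (x) f_j of C^n (x) C^m is represented by its
   coefficient matrix a : 'M[C]_(n,m).  Operators on C^n (x) C^m (elements of
   M_n (x) M_m) are represented by their entries indexed by pairs of basis
   indices:  W (i,j) (k,l) = < e_i (x) f_j , W (e_k (x) f_l) >. *)
Definition op := 'I_n * 'I_m -> 'I_n * 'I_m -> C.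

(* s : nat -> R is the (0-indexed) sequence of Schmidt coefficients of a:
   s 0 >= s 1 >= ... >= s (d-1) >= 0 are the singular values of a, i.e. the
   square roots of the eigenvalues (with multiplicity) of a a^*, whose remaining
   n - d eigenvalues are 0; s j = 0 for j >= d. *)
Definition schmidt_coeffs (a : 'M[C]_(n, m)) (s : nat -> R) : Prop :=
  let d := minn n m in
  [/\ forall j, (j < d)%N -> 0 <= s j,
      forall i j, (i <= j)%N -> (j < d)%N -> s j <= s i,
      forall j, (d <= j)%N -> s j = 0
    & char_poly (a *m (map_mx conjc a)^T)
        = \prod_(j < d) ('X - ((s j) ^+ 2)%:C%:P) * 'X^(n - d)].

Definition unit_vec (a : 'M[C]_(n, m)) : Prop :=
  \sum_(i < n) \sum_(j < m) a i j * (a i j)^* = 1.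

Definition kfl (beta : R) : nat := Num.truncn beta.
Definition thfr (beta : R) : R := beta - (kfl beta)%:R.
Definition rcl (beta : R) : nat := if 0 < thfr beta then (kfl beta).+1 else kfl beta.

(* beta-admissibility (s_j is 0-indexed here: paper's s_{j+1} is s j) *)
Definition admissible (beta : R) (a : 'M[C]_(n, m)) : Prop :=
  unit_vec a /\
  exists s, schmidt_coeffs a s /\
    (forall j, (rcl beta <= j)%N -> s j = 0) /\
    (0 < thfr beta ->
       s (kfl beta) <= thfr beta / (kfl beta)%:R * \sum_(j < kfl beta) s j).

Definition V (beta : R) : set 'M[C]_(n, m) := [set a | admissible beta a].

Definition proj (a : 'M[C]_(n, m)) : op :=
  fun p q => a p.1 p.2 * (a q.1 q.2)^*.

Definition cone (beta : R) : set op :=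
  [set X | exists s : seq (R * 'M[C]_(n, m)),
     (forall c, c \in s -> 0 <= c.1 /\ V beta c.2) /\
     forall p q, X p q = \sum_(c <- s) (c.1)%:C * proj c.2 p q].

Definition K (beta : R) : set op :=
  [set X | forall eps : R, 0 < eps ->
     exists Y, cone beta Y /\ forall p q, `|X p q - Y p q| < eps%:C].

Definition hermitian (W : op) : Prop := forall p q, W p q = (W q p)^*.

Definition qform (W : op) (a : 'M[C]_(n, m)) : C :=
  \sum_(p : 'I_n * 'I_m) \sum_(q : 'I_n * 'I_m) (a p.1 p.2)^* * W p q * a q.1 q.2.

Definition BP (beta : R) : set op :=
  [set W | hermitian W /\ forall a, V beta a -> 0 <= qform W a].

End Defs.

(* Main.v *)
Require Import Defs.
From HB Require Import structures.
From mathcomp Require Import all_boot all_order all_algebra.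
From mathcomp Require Import classical_sets reals complex.
From mathcomp Require Import ring lra.
Import Order.TTheory GRing.Theory Num.Theory.
Local Open Scope ring_scope.
Local Open Scope sesquilinear_scope.


Lemma CS (F : numDomainType) (I : finType) (x y : I -> F) :
  (forall i, 0 <= x i) -> (forall i, 0 <= y i) ->
  (\sum_i x i * y i) ^+ 2 <= (\sum_i x i ^+ 2) * (\sum_i y i ^+ 2).
Proof.
move=> x0 y0.
pose Z := \sum_i \sum_j (x i * y j - x j * y i) ^+ 2.
have Z0 : 0 <= Z.
  apply: sumr_ge0 => i _; apply: sumr_ge0 => j _.
  have rr : x i * y j - x j * y i \is Num.real.
    by apply: realB; apply: ger0_real; apply: mulr_ge0.
  by rewrite -(real_normK rr) exprn_ge0.
have EZ : Z = 2%:R * ((\sum_i x i ^+ 2) * (\sum_i y i ^+ 2) - (\sum_i x i * y i) ^+ 2).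
  rewrite /Z.
  transitivity (\sum_i \sum_j (x i ^+ 2 * y j ^+ 2) + \sum_i \sum_j (x j ^+ 2 * y i ^+ 2)
     - 2%:R * \sum_i \sum_j ((x i * y i) * (x j * y j))).
    rewrite mulr_sumr -big_split -sumrB /=; apply: eq_bigr => i _.
    rewrite mulr_sumr -big_split -sumrB /=; apply: eq_bigr => j _; ring.
  rewrite [X in _ + X - _]exchange_big /= expr2 mulr_suml.
  rewrite [in RHS]mulr_suml.
  have -> : \sum_i \sum_j x i ^+ 2 * y j ^+ 2 = \sum_i (x i ^+ 2 * \sum_j y j ^+ 2).
    by apply: eq_bigr => i _; rewrite mulr_sumr.
  have -> : \sum_i \sum_j x i * y i * (x j * y j) = \sum_i (x i * y i * \sum_j x j * y j).
    by apply: eq_bigr => i _; rewrite mulr_sumr.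
  ring.
have : 0 <= 2%:R * ((\sum_i x i ^+ 2) * (\sum_i y i ^+ 2) - (\sum_i x i * y i) ^+ 2) by rewrite -EZ.
by rewrite pmulr_rge0 ?ltr0n // subr_ge0.
Qed.

Lemma char_poly_sim (F : fieldType) n (P D : 'M[F]_n) : P \in unitmx ->
  char_poly (invmx P *m D *m P) = char_poly D.
Proof.
move=> Pu.
rewrite /char_poly /char_poly_mx.
set P' := map_mx polyC P.
have P'u : P' \in unitmx by rewrite map_unitmx.
have -> : map_mx polyC (invmx P *m D *m P) = invmx P' *m map_mx polyC D *m P'.
  by rewrite !map_mxM map_invmx.
have E : ('X%:M : 'M_n) - invmx P' *m map_mx polyC D *m P' =
   invmx P' *m ('X%:M - map_mx polyC D) *m P'.
  by rewrite mulmxBr mulmxBl mul_mx_scalar -scalemxAl mulVmx // scalemx1.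
rewrite E !det_mulmx mulrAC -det_mulmx mulVmx // det1 mul1r.
by [].
Qed.

Lemma prod_nseq0 (F : idomainType) k :
  \prod_(x <- nseq k (0 : F)) ('X - x%:P) = 'X^k.
Proof. elim: k => [|k IH]; first by rewrite big_nil expr0.
by rewrite /= big_cons IH subr0 exprS. Qed.

Section Main.
Variable R : realType.
Local Notation C := R[i].
Local Notation toC := (real_complex R).
Variables n m : nat.

Lemma conjcE (x : C) : conjc x = x^*.
Proof. by case: x. Qed.

Lemma map_conjcE (a : 'M[C]_(n, m)) : (map_mx conjc a)^T = a^t*.
Proof. by apply/matrixP => i j; rewrite !mxE conjcE. Qed.

Lemma schmidt_perm (a : 'M[C]_(n, m)) s (P : 'M[C]_n) (lam : 'rV[C]_n) :
  schmidt_coeffs a s -> P \in unitmx ->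
  a *m a^t* = invmx P *m diag_mx lam *m P ->
  perm_eq [seq lam 0 i | i <- index_enum 'I_n]
    ([seq toC (s j ^+ 2) | j <- iota 0 (minn n m)] ++ nseq (n - minn n m) 0).
Proof.
move=> [_ _ _ Hc] Pu HM.
rewrite map_conjcE HM char_poly_sim // char_poly_trig ?diag_mx_is_trig // in Hc.
apply: prod_XsubC_eq.
rewrite big_map big_cat /= prod_nseq0 big_map.
have -> : iota 0 (minn n m) = index_iota 0 (minn n m) by rewrite /index_iota subn0.
rewrite big_mkord -Hc.
by apply: eq_bigr => i _; rewrite mxE eqxx mulr1n.
Qed.


Lemma sum_widen_le (r : nat) (H : (r <= n)%N) (f : 'I_n -> C) :
  (forall i, 0 <= f i) -> \sum_(l < r) f (widen_ord H l) <= \sum_(l < n) f l.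
Proof.
move=> f0; rewrite -(big_ord_narrow H) [X in _ <= X](bigID (fun i : 'I_n => (i < r)%N)) /=.
by rewrite lerDl sumr_ge0.
Qed.

Lemma sum_widen_le' (r : nat) (H : (r <= m)%N) (f : 'I_m -> C) :
  (forall i, 0 <= f i) -> \sum_(l < r) f (widen_ord H l) <= \sum_(l < m) f l.
Proof.
move=> f0; rewrite -(big_ord_narrow H) [X in _ <= X](bigID (fun i : 'I_m => (i < r)%N)) /=.
by rewrite lerDl sumr_ge0.
Qed.


Lemma KL (a : 'M[C]_(n, m)) s r (Hn : (r <= n)%N) (Hm : (r <= m)%N) :
  schmidt_coeffs a s ->
  `|\sum_(l < r) a (widen_ord Hn l) (widen_ord Hm l)| <= toC (\sum_(j < minn n m) s j).
Proof.
move=> Hs.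
set M := a *m a^t*.
have Mh : M^t* = M.
  apply/matrixP => i j; rewrite !mxE rmorph_sum; apply: eq_bigr => l _.
  rewrite !mxE rmorphM mulrC; congr (_ * _); exact: conjCK.
have Mn : M \is normalmx by rewrite qualifE Mh.
set P := spectralmx M; set lam := spectral_diag M.
have HM : M = invmx P *m diag_mx lam *m P by apply/orthomx_spectralP.
have PU : P \is unitarymx by apply: spectral_unitarymx.
have Pu : P \in unitmx by apply: unitarymx_unit.
have PP : P *m P^t* = 1%:M by apply/unitarymxP.
have PPl : P^t* *m P = 1%:M by rewrite -invmx_unitary // mulVmx.
have Hperm := @schmidt_perm a s P lam Hs Pu HM.
set b := P *m a.
have Hb : b *m b^t* = diag_mx lam.
  rewrite /b trmx_mul map_mxM mulmxA -(mulmxA P) -/M HM invmx_unitary //.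
  by rewrite !mulmxA PP mul1mx -mulmxA PP mulmx1.
have lamE : forall i, lam 0 i = \sum_(l < m) `|b i l| ^+ 2.
  move=> i; have := congr1 (fun X : 'M[C]_n => X i i) Hb; rewrite /= !mxE eqxx mulr1n => <-.
  by apply: eq_bigr => l _; rewrite !mxE normCK.
have lam0 : forall i, 0 <= lam 0 i by move=> i; rewrite lamE sumr_ge0 // => l _; rewrite exprn_ge0.
have Prow : forall i, \sum_(l < n) `|P i l| ^+ 2 = 1.
  move=> i; have := congr1 (fun X : 'M[C]_n => X i i) PP; rewrite /= !mxE eqxx mulr1n => <-.
  by apply: eq_bigr => l _; rewrite !mxE normCK.
have aE : forall x y, a x y = \sum_i (P i x)^* * b i y.
  move=> x y; have -> : a = P^t* *m b by rewrite /b mulmxA PPl mul1mx.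
  by rewrite mxE; apply: eq_bigr => i _; rewrite !mxE.
have step1 : `|\sum_(l < r) a (widen_ord Hn l) (widen_ord Hm l)|
     <= \sum_(i < n) \sum_(l < r) `|P i (widen_ord Hn l)| * `|b i (widen_ord Hm l)|.
  under eq_bigr do rewrite aE.
  rewrite exchange_big /=; apply: (le_trans (ler_norm_sum _ _ _)).
  apply: ler_sum => i _; apply: (le_trans (ler_norm_sum _ _ _)).
  by apply: ler_sum => l _; rewrite normrM norm_conjC.
have step2 : forall i, \sum_(l < r) `|P i (widen_ord Hn l)| * `|b i (widen_ord Hm l)|
     <= sqrtC (lam 0 i).
  move=> i; set t := \sum_(l < r) _.
  have t0 : 0 <= t by apply: sumr_ge0 => l _; rewrite mulr_ge0.
  suff h : t ^+ 2 <= lam 0 i.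
    by rewrite -(sqrCK t0) ler_sqrtC // nnegrE ?exprn_ge0 ?lam0.
  apply: (le_trans (@CS _ _ (fun l => `|P i (widen_ord Hn l)|) (fun l => `|b i (widen_ord Hm l)|) _ _)) => [l|l|]; rewrite ?normr_ge0 //.
  rewrite -[lam 0 i]mul1r; apply: ler_pM.
  - by apply: sumr_ge0 => l _; rewrite exprn_ge0.
  - by apply: sumr_ge0 => l _; rewrite exprn_ge0.
  - by rewrite -(Prow i); apply: (@sum_widen_le r Hn (fun l => `|P i l| ^+ 2)) => l; rewrite exprn_ge0.
  - by rewrite lamE; apply: (@sum_widen_le' r Hm (fun l => `|b i l| ^+ 2)) => l; rewrite exprn_ge0.
apply: (le_trans step1); apply: (le_trans (ler_sum _ (fun i _ => step2 i))).
rewrite -(big_map (fun i => lam 0 i) xpredT sqrtC) (perm_big _ Hperm) big_cat /= big_map.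
rewrite [X in _ + X]big1_seq ?addr0; last by move=> x /andP[_ /nseqP [-> _]]; rewrite sqrtC0.
have -> : iota 0 (minn n m) = index_iota 0 (minn n m) by rewrite /index_iota subn0.
rewrite big_mkord raddf_sum /=; rewrite le_eqVlt; apply/orP; left; apply/eqP; apply: eq_bigr => j _.
rewrite rmorphXn sqrCK //.
by have [H0 _ _ _] := Hs; rewrite -[0 : C]/(toC 0) lecR H0.
Qed.


Lemma norm_schmidt (a : 'M[C]_(n, m)) s : schmidt_coeffs a s ->
  \sum_(i < n) \sum_(j < m) a i j * (a i j)^* = toC (\sum_(j < minn n m) s j ^+ 2).
Proof.
move=> Hs.
set M := a *m a^t*.
have Mh : M^t* = M.
  apply/matrixP => i j; rewrite !mxE rmorph_sum; apply: eq_bigr => l _.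
  rewrite !mxE rmorphM mulrC; congr (_ * _); exact: conjCK.
have Mn : M \is normalmx by rewrite qualifE Mh.
set P := spectralmx M; set lam := spectral_diag M.
have HM : M = invmx P *m diag_mx lam *m P by apply/orthomx_spectralP.
have PU : P \is unitarymx by apply: spectral_unitarymx.
have Pu : P \in unitmx by apply: unitarymx_unit.
have Hperm := @schmidt_perm a s P lam Hs Pu HM.
have trM : \tr M = \sum_i lam 0 i.
  rewrite HM -mulmxA mxtrace_mulC mulmxK // mxtrace_diag.
  by [].
have -> : \sum_(i < n) \sum_(j < m) a i j * (a i j)^* = \tr M.
  by rewrite /mxtrace; apply: eq_bigr => i _; rewrite mxE; apply: eq_bigr => j _; rewrite !mxE.
rewrite trM -(big_map (fun i => lam 0 i) xpredT id) (perm_big _ Hperm) big_cat /= big_map.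
rewrite [X in _ + X]big1_seq ?addr0; last by move=> x /andP[_ /nseqP [-> _]].
have -> : iota 0 (minn n m) = index_iota 0 (minn n m) by rewrite /index_iota subn0.
by rewrite big_mkord raddf_sum.
Qed.

End Main.

Section Wit.
Variable R : realType.
Local Notation C := R[i].
Local Notation toC := (real_complex R).
Variables n m r : nat.
Hypotheses (Hn : (r <= n)%N) (Hm : (r <= m)%N).

Definition emb (l : 'I_r) : 'I_n * 'I_m := (widen_ord Hn l, widen_ord Hm l).
Lemma emb_inj : injective emb.
Proof. by move=> l1 l2 [] h _; apply: val_inj. Qed.
Definition SetS : {set 'I_n * 'I_m} := emb @: setT.
Definition Wc (c : R) : op R n m :=
  fun p q => toC c * (p == q)%:R - (p \in SetS)%:R * (q \in SetS)%:R.
Definition trr (a : 'M[C]_(n, m)) := \sum_(l < r) a (widen_ord Hn l) (widen_ord Hm l).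

Lemma sumS (f : 'I_n * 'I_m -> C) : \sum_q (q \in SetS)%:R * f q = \sum_l f (emb l).
Proof.
transitivity (\sum_(q in SetS) f q).
  rewrite [RHS]big_mkcond /=.
  by apply: eq_bigr => q _; case: (q \in SetS); rewrite ?mul1r ?mul0r.
rewrite /SetS big_imset /=; last by move=> x y _ _; apply: emb_inj.
by apply: eq_bigl => l; rewrite in_setT.
Qed.

Lemma qform_Wc c (a : 'M[C]_(n, m)) :
  qform (Wc c) a = toC c * (\sum_p (a p.1 p.2)^* * a p.1 p.2) - (trr a)^* * trr a.
Proof.
rewrite /qform.
transitivity (\sum_p \sum_q ((a p.1 p.2)^* * (toC c * (p == q)%:R) * a q.1 q.2)
  - \sum_p \sum_q ((a p.1 p.2)^* * ((p \in SetS)%:R * (q \in SetS)%:R) * a q.1 q.2)).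
  rewrite -sumrB; apply: eq_bigr => p _; rewrite -sumrB; apply: eq_bigr => q _.
  rewrite /Wc; ring.
congr (_ - _).
  rewrite mulr_sumr; apply: eq_bigr => p _.
  rewrite (bigD1 p) //= eqxx big1 ?addr0; first by rewrite mulr1 mulrCA mulrA.
  by move=> q; rewrite eq_sym => /negbTE ->; rewrite mulr0 mulr0 mul0r.
have -> : trr a = \sum_q (q \in SetS)%:R * a q.1 q.2 by rewrite sumS.
rewrite rmorph_sum mulr_suml; apply: eq_bigr => p _.
rewrite mulr_sumr; apply: eq_bigr => q _.
rewrite rmorphM rmorph_nat; ring.
Qed.

Lemma herm_Wc c : Defs.hermitian (Wc c).
Proof.
move=> p q; rewrite /Wc rmorphB !rmorphM !rmorph_nat.
rewrite eq_sym [X in _ = _ - X]mulrC; congr (_ * _ - _).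
symmetry; exact: conjc_real.
Qed.

End Wit.

Section KS.
Variable R : realType.
Local Notation C := R[i].
Local Notation toC := (real_complex R).
Variables n m : nat.

Definition Lf (W X : op R n m) : C := \sum_p \sum_q W p q * X q p.

Lemma Lf_proj W (a : 'M[C]_(n, m)) : Lf W (proj a) = qform W a.
Proof.
rewrite /Lf /qform; apply: eq_bigr => p _; apply: eq_bigr => q _.
by rewrite /proj; ring.
Qed.

Lemma cone_mono b b' : (@V R n m b `<=` @V R n m b')%classic -> (@cone R n m b `<=` @cone R n m b')%classic.
Proof.
move=> HV X [s [Hs HX]]; exists s; split => // c cs.
by have [? ?] := Hs c cs; split => //; apply: HV.
Qed.

Lemma K_mono b b' : (@V R n m b `<=` @V R n m b')%classic -> (@K R n m b `<=` @K R n m b')%classic.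
Proof.
move=> HV X HX eps eps0; have [Y [HY HXY]] := HX eps eps0.
by exists Y; split => //; apply: cone_mono HY.
Qed.

Lemma BP_anti b b' : (@V R n m b `<=` @V R n m b')%classic -> (@BP R n m b' `<=` @BP R n m b)%classic.
Proof. by move=> HV W [Hh HW]; split => // a Va; apply: HW; apply: HV. Qed.

Lemma proj_in_K b a : @V R n m b a -> @K R n m b (proj a).
Proof.
move=> Va eps eps0; exists (proj a); split.
  exists [:: (1, a)]; split.
    by move=> c; rewrite inE => /eqP ->; split.
  by move=> p q; rewrite big_seq1 /= rmorph1 mul1r.
by move=> p q; rewrite subrr normr0 -[0 : C]/(toC 0) ltcR.
Qed.

Lemma Lf_cone b W Y : @BP R n m b W -> @cone R n m b Y -> 0 <= Lf W Y.
Proof.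
move=> [_ HW] [s [Hs HY]].
rewrite /Lf.
under eq_bigr do under eq_bigr do rewrite HY mulr_sumr.
under eq_bigr do rewrite exchange_big /=.
rewrite exchange_big /= big_seq; apply: sumr_ge0 => c cs.
have [c0 Vc] := Hs c cs.
have -> : \sum_i \sum_j W i j * (toC c.1 * proj c.2 j i) = toC c.1 * qform W c.2.
  rewrite -Lf_proj /Lf mulr_sumr; apply: eq_bigr => p _; rewrite mulr_sumr.
  by apply: eq_bigr => q _; ring.
by apply: mulr_ge0; [rewrite -[0 : C]/(toC 0) lecR | apply: HW].
Qed.


Lemma proj_notin_K b W (a : 'M[C]_(n, m)) :
  @BP R n m b W -> qform W a < 0 -> ~ @K R n m b (proj a).
Proof.
move=> HBP hq HK.
set q0 := qform W a.
set B := \sum_p \sum_q `|W p q|.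
have B0 : 0 <= B by apply: sumr_ge0 => p _; apply: sumr_ge0 => q _.
have Bc0 : 0 < B + 1 by rewrite ltr_wpDl // ltr01.
set e := - q0 / (B + 1).
have e0 : 0 < e by rewrite divr_gt0 // oppr_gt0.
have er : e \is Num.real by apply: ger0_real; apply: ltW.
set eps := complex.Re e.
have epsE : toC eps = e by apply: RRe_real.
have eps0 : 0 < eps by rewrite -ltcR epsE.
have [Y [HY HXY]] := HK eps eps0.
have L0 := @Lf_cone b W Y HBP HY.
have Hdiff : `|Lf W Y - Lf W (proj a)| <= e * B.
  rewrite /Lf -sumrB; apply: le_trans (ler_norm_sum _ _ _) _.
  rewrite /B mulr_sumr; apply: ler_sum => p _.
  rewrite -sumrB; apply: le_trans (ler_norm_sum _ _ _) _.
  rewrite mulr_sumr; apply: ler_sum => q _.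
  rewrite -mulrBr normrM mulrC; apply: ler_wpM2r; first exact: normr_ge0.
  by rewrite distrC -epsE; apply: ltW; apply: HXY.
have H1 : - q0 <= `|Lf W Y - Lf W (proj a)|.
  rewrite Lf_proj -/q0.
  apply: le_trans (real_ler_norm _); last by apply: realB; [apply: ger0_real | apply: ltr0_real].
  by rewrite lerDr.
have H2 : e * B < - q0.
  rewrite /e mulrAC ltr_pdivrMr // ltr_pM2l ?oppr_gt0 //.
  by rewrite ltrDl ltr01.
by have := lt_le_trans (le_lt_trans H1 (le_lt_trans Hdiff H2)) (lexx _); rewrite ltxx.
Qed.

End KS.

Lemma sum_trunc (V : zmodType) (F : nat -> V) d r : (r <= d)%N ->
  (forall j, (r <= j)%N -> F j = 0) -> \sum_(j < d) F j = \sum_(j < r) F j.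
Proof.
move=> rd HF; rewrite -!(big_mkord xpredT) (big_cat_nat (leq0n r) rd) /=.
rewrite [X in _ + X]big_nat_cond [X in _ + X]big1 ?addr0 // => j /andP[/andP[Hj _] _].
exact: HF.
Qed.

Section Real.
Variable R : realType.

Lemma kfl_nat (j : nat) : kfl (j%:R : R) = j.
Proof. exact: natrK. Qed.
Lemma thfr_nat (j : nat) : thfr (j%:R : R) = 0.
Proof. by rewrite /thfr kfl_nat subrr. Qed.
Lemma rcl_nat (j : nat) : rcl (j%:R : R) = j.
Proof. by rewrite /rcl thfr_nat ltxx kfl_nat. Qed.

Variables (k : nat) (th : R).
Hypotheses (th0 : 0 < th) (th1 : th < 1).

Lemma kfl_alpha : kfl (k%:R + th) = k.
Proof.
apply/eqP; rewrite /kfl /= truncn_eq; last by rewrite addr_ge0 // ltW.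
by rewrite lerDl ltW //= -addn1 natrD ltrD2l.
Qed.
Lemma thfr_alpha : thfr (k%:R + th) = th.
Proof. by rewrite /thfr kfl_alpha addrAC subrr add0r. Qed.
Lemma rcl_alpha : rcl (k%:R + th) = k.+1.
Proof. by rewrite /rcl thfr_alpha th0 kfl_alpha. Qed.

Lemma ineq_alpha (kr S t Q : R) : 1 <= kr -> 0 <= S -> 0 <= t -> kr * t <= th * S ->
  S ^+ 2 <= kr * Q -> (S + t) ^+ 2 <= (kr + th) ^+ 2 / (kr + th ^+ 2) * (Q + t ^+ 2).
Proof.
move=> k1 S0 t0 Hkt HQ.
have kp : 0 < kr + th ^+ 2 by rewrite ltr_wpDr ?sqr_ge0 // (lt_le_trans ltr01).
rewrite mulrAC ler_pdivlMr //.
have E : (kr + th) ^+ 2 * (S ^+ 2 + kr * t ^+ 2) - kr * (S + t) ^+ 2 * (kr + th ^+ 2) =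
  (th * S - kr * t) * ((2 * kr - kr * th + th) * S - (kr ^+ 2 + 2 * th * kr - kr) * t).
  by ring.
have F1 : 0 <= th * S - kr * t by rewrite subr_ge0.
have F2 : 0 <= (2 * kr - kr * th + th) * S - (kr ^+ 2 + 2 * th * kr - kr) * t.
  have h1 : (kr ^+ 2 + 2 * th * kr - kr) * t <= (kr + 2 * th - 1) * (th * S).
    have -> : (kr ^+ 2 + 2 * th * kr - kr) * t = (kr + 2 * th - 1) * (kr * t) by ring.
    apply: ler_wpM2l => //; have := th0; lra.
  have h2 : (kr + 2 * th - 1) * (th * S) <= (2 * kr - kr * th + th) * S.
    rewrite mulrA; apply: ler_wpM2r => //.
    have h3 : 0 <= (1 - th) * (kr + th) by apply: mulr_ge0; have := th0; have := th1; lra.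
    nra.
  rewrite subr_ge0; exact: le_trans h1 h2.
have H : kr * (S + t) ^+ 2 * (kr + th ^+ 2) <= (kr + th) ^+ 2 * (S ^+ 2 + kr * t ^+ 2).
  by rewrite -subr_ge0 E mulr_ge0.
have H' : (kr + th) ^+ 2 * (S ^+ 2 + kr * t ^+ 2) <= kr * ((kr + th) ^+ 2 * (Q + t ^+ 2)).
  have -> : kr * ((kr + th) ^+ 2 * (Q + t ^+ 2)) = (kr + th) ^+ 2 * (kr * Q + kr * t ^+ 2) by ring.
  by apply: ler_wpM2l; [apply: sqr_ge0 | rewrite lerD2r].
have kp' : 0 < kr by apply: lt_le_trans ltr01 k1.
rewrite -(ler_pM2l kp') mulrA; exact: le_trans H H'.
Qed.

End Real.

Section DM.
Variable R : realType.
Local Notation C := R[i].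
Local Notation toC := (real_complex R).
Variables n m r : nat.
Hypotheses (Hn : (r <= n)%N) (Hm : (r <= m)%N).

Lemma conj_toC (x : R) : (toC x)^* = toC x.
Proof. exact: conjc_real. Qed.

Definition dm (f : nat -> R) : 'M[C]_(n, m) :=
  \matrix_(i, j) if (i == j :> nat) then toC (f i) else 0.

Lemma dm_M f : (forall j, (r <= j)%N -> f j = 0) ->
  dm f *m (dm f)^t* = diag_mx (\row_i toC (f i ^+ 2)).
Proof.
move=> fz; apply/matrixP => i i'; rewrite !mxE.
under eq_bigr do rewrite !mxE.
case: (ltnP i r) => hi.
  have im : (i < m)%N by apply: leq_trans hi Hm.
  rewrite (bigD1 (Ordinal im)) //= big1 ?addr0; last first.
    move=> l; rewrite -val_eqE /= eq_sym => /negbTE ->; by rewrite mul0r.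
  rewrite eqxx; case: (eqVneq i i') => [<-|ne].
    by rewrite eqxx mulr1n conj_toC -rmorphM expr2.
  have -> : (i' == i :> nat) = false by apply/negbTE; rewrite eq_sym val_eqE.
  by rewrite rmorph0 mulr0 mulr0n.
rewrite fz // expr0n /= rmorph0 mul0rn big1 // => l _.
by case: ifP; rewrite ?mul0r // => _; rewrite rmorph0 mul0r.
Qed.

Lemma dm_unit f : (forall j, (r <= j)%N -> f j = 0) ->
  \sum_(j < r) f j ^+ 2 = 1 -> unit_vec (dm f).
Proof.
move=> fz f1; rewrite /unit_vec.
transitivity (\sum_(i < n) (dm f *m (dm f)^t*) i i).
  by apply: eq_bigr => i _; rewrite mxE; apply: eq_bigr => j _; rewrite !mxE.
rewrite dm_M //.
under eq_bigr do rewrite !mxE eqxx mulr1n.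
rewrite -rmorph_sum (@sum_trunc _ (fun i => f i ^+ 2) n r Hn); last first.
  by move=> j hj; rewrite fz // expr0n.
by rewrite f1 rmorph1.
Qed.

Lemma dm_trr f : @trr R n m r Hn Hm (dm f) = toC (\sum_(l < r) f l).
Proof. by rewrite /trr rmorph_sum; apply: eq_bigr => l _; rewrite mxE eqxx. Qed.

Lemma dm_schmidt f : (forall j, 0 <= f j) -> (forall i j, (i <= j)%N -> f j <= f i) ->
  (forall j, (r <= j)%N -> f j = 0) -> (r <= minn n m)%N -> schmidt_coeffs (dm f) f.
Proof.
move=> f0 fm fz rd; split.
- by move=> j _; apply: f0.
- by move=> i j hij _; apply: fm.
- by move=> j hj; apply: fz; apply: leq_trans rd hj.
rewrite map_conjcE dm_M // char_poly_trig ?diag_mx_is_trig //.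
under eq_bigr do rewrite !mxE eqxx mulr1n.
have dn : (minn n m <= n)%N by rewrite geq_minl.
rewrite -(big_mkord xpredT (fun i => 'X - (toC (f i ^+ 2))%:P)).
rewrite (big_cat_nat (leq0n _) dn) /= big_mkord; congr (_ * _).
rewrite big_nat_cond (eq_bigr (fun _ => 'X)); first by rewrite -big_nat_cond prodr_const_nat.
move=> i /andP[/andP[hi _] _]; rewrite fz ?expr0n ?rmorph0 ?subr0 //.
exact: leq_trans rd hi.
Qed.

End DM.

Section Final.
Variable R : realType.
Local Notation C := R[i].
Local Notation toC := (real_complex R).
Variables (n m k : nat) (th : R).
Hypotheses (k1 : (1 <= k)%N) (kd : (k < minn n m)%N) (th0 : 0 < th) (th1 : th < 1).

Fact hn : (k.+1 <= n)%N. Proof. by move: kd; rewrite leq_min => /andP[]. Qed.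
Fact hm : (k.+1 <= m)%N. Proof. by move: kd; rewrite leq_min => /andP[]. Qed.

Local Notation W := (@Wc R n m k.+1 hn hm).
Local Notation tr := (@trr R n m k.+1 hn hm).

Lemma unit_pair (a : 'M[C]_(n, m)) : unit_vec a -> \sum_p (a p.1 p.2)^* * a p.1 p.2 = 1.
Proof.
move=> <-; rewrite [RHS]pair_bigA /=; apply: eq_bigr => p _.
by rewrite mulrC.
Qed.

Lemma qform_W_unit c (a : 'M[C]_(n, m)) : unit_vec a -> qform (W c) a = toC c - `|tr a| ^+ 2.
Proof. by move=> u; rewrite qform_Wc unit_pair // mulr1 normCKC. Qed.

Lemma sum_sq1 (a : 'M[C]_(n, m)) s : unit_vec a -> schmidt_coeffs a s ->
  \sum_(j < minn n m) s j ^+ 2 = 1.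
Proof.
move=> u Hs; have := @norm_schmidt R n m a s Hs; rewrite u -(rmorph1 toC) => /esym.
exact: fmorph_inj.
Qed.

Lemma Wc_nonneg c (a : 'M[C]_(n, m)) s : unit_vec a -> schmidt_coeffs a s ->
  (\sum_(j < minn n m) s j) ^+ 2 <= c -> 0 <= qform (W c) a.
Proof.
move=> u Hs Hc; rewrite qform_W_unit // subr_ge0.
have h := @KL R n m a s k.+1 hn hm Hs.
apply: (@le_trans _ _ (toC ((\sum_(j < minn n m) s j) ^+ 2))); last by rewrite lecR.
rewrite rmorphXn !expr2; apply: ler_pM => //; exact: normr_ge0.
Qed.


Lemma W1_BP : @BP R n m k%:R (W k%:R).
Proof.
split; first exact: herm_Wc.
move=> a [u [s [Hs [Hz _]]]]; rewrite rcl_nat in Hz.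
apply: (@Wc_nonneg k%:R a s u Hs).
have kd' : (k <= minn n m)%N by apply: ltnW.
have s0 : forall j, (j < minn n m)%N -> 0 <= s j by case: Hs.
rewrite (@sum_trunc _ s _ k kd' Hz).
have sq := @sum_sq1 a s u Hs.
rewrite (@sum_trunc _ (fun j => s j ^+ 2) _ k kd') in sq; last by move=> j hj; rewrite Hz // expr0n.
have := @CS _ _ (fun j : 'I_k => s j) (fun _ => 1) _ _.
rewrite sq mul1r; under eq_bigr do rewrite mulr1.
have -> : \sum_(i < k) (1 : R) ^+ 2 = k%:R.
  by rewrite (eq_bigr (fun _ => 1)) ?sumr_const ?card_ord // => i _; rewrite expr1n.
apply => [j|j]; last exact: ler01.
by apply: s0; apply: leq_trans (ltn_ord j) kd'.
Qed.


Definition c2 : R := (k%:R + th) ^+ 2 / (k%:R + th ^+ 2).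

Lemma W2_BP : @BP R n m (k%:R + th) (W c2).
Proof.
split; first exact: herm_Wc.
move=> a [u [s [Hs [Hz Hth]]]]; rewrite rcl_alpha // in Hz.
rewrite thfr_alpha // kfl_alpha // in Hth; have Hth' := Hth th0.
apply: (@Wc_nonneg c2 a s u Hs).
have kd' : (k.+1 <= minn n m)%N by [].
have s0 : forall j, (j < minn n m)%N -> 0 <= s j by case: Hs.
rewrite (@sum_trunc _ s _ k.+1 kd' Hz) big_ord_recr /=.
have sq := @sum_sq1 a s u Hs.
rewrite (@sum_trunc _ (fun j => s j ^+ 2) _ k.+1 kd') in sq; last by move=> j hj; rewrite Hz // expr0n.
rewrite big_ord_recr /= in sq.
set S := \sum_(i < k) s i in Hth' *.
set Q := \sum_(i < k) s i ^+ 2 in sq *.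
have s0' : forall j : 'I_k, 0 <= s j by move=> j; apply: s0; apply: leq_trans (ltn_ord j) (ltnW kd).
have S0 : 0 <= S by apply: sumr_ge0 => j _; apply: s0'.
have t0 : 0 <= s k by apply: s0 kd.
have kp : 0 < k%:R :> R by rewrite ltr0n.
have HQ : S ^+ 2 <= k%:R * Q.
  have := @CS _ _ (fun j : 'I_k => s j) (fun _ => 1) s0' (fun _ => ler01).
  under eq_bigr do rewrite mulr1.
  have -> : \sum_(i < k) (1 : R) ^+ 2 = k%:R.
    by rewrite (eq_bigr (fun _ => 1)) ?sumr_const ?card_ord // => i _; rewrite expr1n.
  by rewrite mulrC.
have Hkt : k%:R * s k <= th * S.
  have ki : 0 < (k%:R : R)^-1 by rewrite invr_gt0.
  rewrite -(ler_pM2l ki) mulrA mulVf ?gt_eqF // mul1r.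
  by rewrite mulrA [_^-1 * th]mulrC.
have := @ineq_alpha R th th0 th1 k%:R S (s k) Q _ S0 t0 Hkt HQ.
rewrite sq mulr1; apply; by rewrite ler1n.
Qed.

End Final.

Section Wits.
Variable R : realType.
Local Notation C := R[i].
Local Notation toC := (real_complex R).
Variables (n m k : nat) (th : R).
Hypotheses (k1 : (1 <= k)%N) (kd : (k < minn n m)%N) (th0 : 0 < th) (th1 : th < 1).

Local Notation Hn := (hn n m k kd).
Local Notation Hm := (hm n m k kd).
Local Notation W := (Wc R n m k.+1 Hn Hm).
Local Notation tr := (trr R n m k.+1 Hn Hm).

Lemma conj_toC' (x : R) : (toC x)^* = toC x.
Proof. exact: conjc_real. Qed.

Lemma qform_dm c f : (forall j, (k.+1 <= j)%N -> f j = 0) -> \sum_(j < k.+1) f j ^+ 2 = 1 ->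
  qform (W c) (dm R n m f) = toC (c - (\sum_(l < k.+1) f l) ^+ 2).
Proof.
move=> fz f1; rewrite qform_W_unit; last exact: (@dm_unit R n m k.+1 Hn Hm f fz f1).
by rewrite dm_trr normCKC conj_toC' -rmorphM -rmorphB expr2.
Qed.

Definition x1 : R := (Num.sqrt (k%:R + th ^+ 2))^-1.
Definition f1 (j : nat) : R := if (j < k)%N then x1 else if j == k then th * x1 else 0.

Lemma kq : 0 < k%:R + th ^+ 2 :> R.
Proof. by rewrite ltr_wpDr ?sqr_ge0 // ltr0n. Qed.
Lemma x1_gt0 : 0 < x1.
Proof. by rewrite invr_gt0 sqrtr_gt0 kq. Qed.
Lemma x1_sq : x1 ^+ 2 = (k%:R + th ^+ 2)^-1.
Proof. by rewrite exprVn sqr_sqrtr // ltW // kq. Qed.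

Lemma f1_ge0 j : 0 <= f1 j.
Proof.
have := x1_gt0; rewrite /f1; case: ifP => _; first by move/ltW.
case: ifP => _ // h; apply: mulr_ge0; exact: ltW.
Qed.

Lemma f1_z j : (k.+1 <= j)%N -> f1 j = 0.
Proof.
move=> hj; rewrite /f1 ifF; last by apply/negbTE; rewrite -leqNgt ltnW.
by rewrite ifF //; apply/negbTE; rewrite neq_ltn hj orbT.
Qed.

Lemma f1_mono i j : (i <= j)%N -> f1 j <= f1 i.
Proof.
move=> hij; have x0 := x1_gt0.
have [hj|hj] := ltnP j k.
  by rewrite /f1 hj (leq_ltn_trans hij hj).
case: (eqVneq j k) => [ej|nej].
  subst j; have [hi|hi] := ltnP i k.
    rewrite /f1 ltnn eqxx hi; rewrite -[X in _ <= X]mul1r; apply: ler_wpM2r; exact: ltW.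
  by have -> : i = k by apply/eqP; rewrite eqn_leq hij hi.
rewrite f1_z ?f1_ge0 //; by rewrite ltn_neqAle eq_sym nej hj.
Qed.

Lemma f1_sumk : \sum_(j < k) f1 j = k%:R * x1.
Proof.
rewrite (eq_bigr (fun _ => x1)); last by move=> j _; rewrite /f1 ltn_ord.
by rewrite sumr_const card_ord mulr_natl.
Qed.

Lemma f1_sum : \sum_(j < k.+1) f1 j = (k%:R + th) * x1.
Proof. by rewrite big_ord_recr /= f1_sumk /f1 ltnn eqxx mulrDl. Qed.

Lemma f1_sq : \sum_(j < k.+1) f1 j ^+ 2 = 1.
Proof.
rewrite big_ord_recr /= (eq_bigr (fun _ => x1 ^+ 2)); last by move=> j _; rewrite /f1 ltn_ord.
rewrite sumr_const card_ord /f1 ltnn eqxx exprMn -mulr_natl -mulrDl x1_sq mulfV //.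
by rewrite gt_eqF // kq.
Qed.

Definition a1 := dm R n m f1.

Lemma a1_V : @V R n m (k%:R + th) a1.
Proof.
split; first exact: (@dm_unit R n m k.+1 Hn Hm f1 f1_z f1_sq).
exists f1; split; first exact: (@dm_schmidt R n m k.+1 Hm f1 f1_ge0 f1_mono f1_z kd).
split; first by rewrite rcl_alpha //; exact: f1_z.
rewrite thfr_alpha // kfl_alpha // f1_sumk => _.
by rewrite /f1 ltnn eqxx mulrA mulfVK // gt_eqF // ltr0n.
Qed.

Lemma a1_neg : qform (W k%:R) a1 < 0.
Proof.
rewrite /a1 qform_dm; [|exact: f1_z|exact: f1_sq].
rewrite -[0 : C]/(toC 0) ltcR subr_lt0 f1_sum exprMn x1_sq.
rewrite ltr_pdivlMr ?kq //.
have k0 : 0 < k%:R :> R by rewrite ltr0n.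
have h1 : 0 < th * (2 - th) by apply: mulr_gt0 => //; have := th1; lra.
have h2 : 0 < k%:R * (th * (2 - th)) by apply: mulr_gt0.
have h3 : 0 <= th ^+ 2 by apply: sqr_ge0.
rewrite -subr_gt0.
have -> : (k%:R + th) ^+ 2 - k%:R * (k%:R + th ^+ 2) = k%:R * (th * (2 - th)) + th ^+ 2 by ring.
exact: ltr_wpDr h3 h2.
Qed.


Definition y2 : R := (Num.sqrt (k.+1%:R))^-1.
Definition f2 (j : nat) : R := if (j < k.+1)%N then y2 else 0.

Lemma y2_gt0 : 0 < y2.
Proof. by rewrite invr_gt0 sqrtr_gt0 ltr0n. Qed.
Lemma y2_sq : y2 ^+ 2 = (k.+1%:R)^-1.
Proof. by rewrite exprVn sqr_sqrtr // ler0n. Qed.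

Lemma f2_ge0 j : 0 <= f2 j.
Proof. by rewrite /f2; case: ifP => // _; apply: ltW; apply: y2_gt0. Qed.
Lemma f2_z j : (k.+1 <= j)%N -> f2 j = 0.
Proof. by move=> hj; rewrite /f2 ltnNge hj. Qed.
Lemma f2_mono i j : (i <= j)%N -> f2 j <= f2 i.
Proof.
move=> hij; have [hj|hj] := ltnP j k.+1.
  by rewrite /f2 hj (leq_ltn_trans hij hj).
by rewrite f2_z ?f2_ge0.
Qed.
Lemma f2_sum : \sum_(j < k.+1) f2 j = k.+1%:R * y2.
Proof.
rewrite (eq_bigr (fun _ => y2)); last by move=> j _; rewrite /f2 ltn_ord.
by rewrite sumr_const card_ord mulr_natl.
Qed.
Lemma f2_sq : \sum_(j < k.+1) f2 j ^+ 2 = 1.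
Proof.
rewrite (eq_bigr (fun _ => y2 ^+ 2)); last by move=> j _; rewrite /f2 ltn_ord.
by rewrite sumr_const card_ord y2_sq -[LHS]mulr_natr mulVf // pnatr_eq0.
Qed.

Definition a2 := dm R n m f2.

Lemma a2_V : @V R n m (k.+1%:R) a2.
Proof.
split; first exact: (@dm_unit R n m k.+1 Hn Hm f2 f2_z f2_sq).
exists f2; split; first exact: (@dm_schmidt R n m k.+1 Hm f2 f2_ge0 f2_mono f2_z kd).
split; first by rewrite rcl_nat; exact: f2_z.
by rewrite thfr_nat ltxx.
Qed.

Lemma a2_neg : qform (W (c2 R k th)) a2 < 0.
Proof.
rewrite /a2 qform_dm; [|exact: f2_z|exact: f2_sq].
rewrite -[0 : C]/(toC 0) ltcR subr_lt0 f2_sum exprMn y2_sq.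
rewrite expr2 -mulrA mulfV ?pnatr_eq0 // mulr1 /c2.
have kq' : 0 < k%:R + th ^+ 2 :> R by rewrite ltr_wpDr ?sqr_ge0 // ltr0n.
rewrite ltr_pdivrMr //.
have k0 : 0 < k%:R :> R by rewrite ltr0n.
have h1 : 0 < (1 - th) ^+ 2 by rewrite exprn_gt0 // subr_gt0.
rewrite -subr_gt0.
have -> : k.+1%:R * (k%:R + th ^+ 2) - (k%:R + th) ^+ 2 = k%:R * (1 - th) ^+ 2 :> R.
  by rewrite -addn1 natrD; ring.
exact: mulr_gt0.
Qed.

End Wits.

Close Scope sesquilinear_scope.
Local Open Scope classical_set_scope.

Lemma V_k_alpha (R : realType) n m k (th : R) : (k < minn n m)%N -> 0 < th -> th < 1 ->
  @V R n m k%:R `<=` @V R n m (k%:R + th).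
Proof.
move=> kd th0 th1 a [u [s [Hs [Hz _]]]]; split => //; exists s; split => //; split.
  rewrite rcl_alpha // => j hj; apply: Hz; rewrite rcl_nat; exact: ltnW hj.
rewrite thfr_alpha // kfl_alpha // => _; rewrite (Hz k) ?rcl_nat //.
apply: mulr_ge0; first by apply: divr_ge0; [apply: ltW | apply: ler0n].
apply: sumr_ge0 => j _; case: Hs => s0 _ _ _; apply: s0.
exact: leq_trans (ltn_ord j) (ltnW kd).
Qed.

Lemma V_alpha_k1 (R : realType) n m k (th : R) : 0 < th -> th < 1 ->
  @V R n m (k%:R + th) `<=` @V R n m k.+1%:R.
Proof.
move=> th0 th1 a [u [s [Hs [Hz _]]]]; split => //; exists s; split => //; split.
  by rewrite rcl_nat => j hj; apply: Hz; rewrite rcl_alpha.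
by rewrite thfr_nat ltxx.
Qed.

Theorem proposition3p7 (R : realType) (n m k : nat) (theta : R) :
  (1 <= k)%N -> (k < minn n m)%N -> 0 < theta -> theta < 1 ->
  let alpha := k%:R + theta in
  [/\ @V R n m k%:R `<` @V R n m alpha /\ @V R n m alpha `<` @V R n m k.+1%:R,
      @K R n m k%:R `<` @K R n m alpha /\ @K R n m alpha `<` @K R n m k.+1%:R
    & @BP R n m k.+1%:R `<` @BP R n m alpha /\ @BP R n m alpha `<` @BP R n m k%:R].
Proof.
move=> k1 kd th0 th1 alpha.
have VkA := @V_k_alpha R n m k theta kd th0 th1.
have VAk1 := @V_alpha_k1 R n m k theta th0 th1.
have a1V := @a1_V R n m k theta k1 kd th0 th1.
have a1N := @a1_neg R n m k theta k1 kd th0 th1.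
have a2V := @a2_V R n m k kd.
have a2N := @a2_neg R n m k theta k1 kd th1.
have W1B := @W1_BP R n m k kd.
have W2B := @W2_BP R n m k theta k1 kd th0 th1.
have a1nV : ~ @V R n m k%:R (a1 R n m k theta).
  by move=> h; have := lt_le_trans a1N (W1B.2 _ h); rewrite ltxx.
have a2nV : ~ @V R n m alpha (a2 R n m k).
  by move=> h; have := lt_le_trans a2N (W2B.2 _ h); rewrite ltxx.
have P1 : @V R n m k%:R `<` @V R n m alpha.
  by split; [exact: VkA | move=> H; exact: a1nV (H _ a1V)].
have P2 : @V R n m alpha `<` @V R n m k.+1%:R.
  by split; [exact: VAk1 | move=> H; exact: a2nV (H _ a2V)].
have P3 : @K R n m k%:R `<` @K R n m alpha.
  split; first exact: K_mono.
  move=> H; exact: (@proj_notin_K R n m _ _ _ W1B a1N (H _ (@proj_in_K R n m _ _ a1V))).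
have P4 : @K R n m alpha `<` @K R n m k.+1%:R.
  split; first exact: K_mono.
  move=> H; exact: (@proj_notin_K R n m _ _ _ W2B a2N (H _ (@proj_in_K R n m _ _ a2V))).
have P5 : @BP R n m k.+1%:R `<` @BP R n m alpha.
  split; first exact: BP_anti.
  by move=> H; have := lt_le_trans a2N ((H _ W2B).2 _ a2V); rewrite ltxx.
have P6 : @BP R n m alpha `<` @BP R n m k%:R.
  split; first exact: BP_anti.
  by move=> H; have := lt_le_trans a1N ((H _ W1B).2 _ a1V); rewrite ltxx.
by split; split.
Qed.
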